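(* Let $S$ be a closed densely defined symmetric operator in a separable Hilbert space $\mathfrak H$ with equal nonzero defect numbers. Then $S$ is a Phillips symmetric operator if and only if $$\mathfrak N_\lambda\subset \mathcal D(S)\dotplus \mathfrak N_\mu\quad\text{for all }\lambda,\mu\in\mathbb C_+ .$$
   Context: $\mathbb C_\pm$ denote the open upper/lower half planes. For a closed densely defined symmetric operator $S$ in $\mathfrak H$, $\mathfrak N_\lambda=\ker(S^*-\lambda I)$, $\lambda\in\mathbb C\setminus\mathbb R$, are its defect subspaces, and its defect numbers are $\langle\dim\mathfrak N_i,\dim\mathfrak N_{-i}\rangle$; $\dotplus$ denotes a (non-orthogonal) direct sum. A boundary triplet of $S^*$ is $(\mathcal H,\Gamma_-,\Gamma_+)$, where $\mathcal H$ is a Hilbert space and $\Gamma_\pm:\mathcal D(S^* )\to\mathcal H$ are linear maps with $(S^*f,g)-(f,S^*g)=i[(\Gamma_+f,\Gamma_+g)_{\mathcal H}-(\Gamma_-f,\Gamma_-g)_{\mathcal H}]$ for all $f,g\in\mathcal D(S^* )$ and $(\Gamma_-,\Gamma_+):\mathcal D(S^* )\to\mathcal H\oplus\mathcal H$ surjective. For $\lambda\in\mathbb C_+$ let $A_\lambda=S^*\upharpoonright_{\mathcal D(S)\dotplus\mathfrak N_\lambda}$; there is a bounded operator $\Theta(\lambda)$ in $\mathcal H$ such that $\mathcal D(A_\lambda)=\{f\in\mathcal D(S^* ):\Theta(\lambda)\Gamma_+f=\Gamma_-f\}$; $\Theta(\cdot)$ is called the characteristic function of $S$ associated with the triplet.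 A closed densely defined symmetric operator with equal nonzero defect numbers is called a Phillips symmetric operator (PSO) if its characteristic function is constant on $\mathbb C_+$ (this property does not depend on the choice of boundary triplet). *)

(* Defs.v *)
From Stdlib Require Import Reals List.
Open Scope R_scope.
Set Implicit Arguments.

Record Cplx := mkC { re : R ; im : R }.
Definition C0 : Cplx := mkC 0 0.
Definition C1 : Cplx := mkC 1 0.
Definition Ci : Cplx := mkC 0 1.
Definition Cadd (a b : Cplx) : Cplx := mkC (re a + re b) (im a + im b).
Definition Copp (a : Cplx) : Cplx := mkC (- re a) (- im a).
Definition Csub (a b : Cplx) : Cplx := Cadd a (Copp b).
Definition Cmul (a b : Cplx) : Cplx :=
  mkC (re a * re b - im a * im b) (re a * im b + im a * re b).
Definition Cconj (a : Cplx) : Cplx := mkC (re a) (- im a).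

Definition Cplus (z : Cplx) : Prop := 0 < im z.

Record HilbertSpace := {
  carrier :> Type ;
  hzero : carrier ;
  hadd : carrier -> carrier -> carrier ;
  hopp : carrier -> carrier ;
  hscal : Cplx -> carrier -> carrier ;
  inner : carrier -> carrier -> Cplx ;
  hadd_assoc : forall x y z, hadd x (hadd y z) = hadd (hadd x y) z ;
  hadd_comm : forall x y, hadd x y = hadd y x ;
  hadd_0 : forall x, hadd x hzero = x ;
  hadd_opp : forall x, hadd x (hopp x) = hzero ;
  hscal_1 : forall x, hscal C1 x = x ;
  hscal_assoc : forall a b x, hscal a (hscal b x) = hscal (Cmul a b) x ;
  hscal_distr_v : forall a x y, hscal a (hadd x y) = hadd (hscal a x) (hscal a y) ;
  hscal_distr_s : forall a b x, hscal (Cadd a b) x = hadd (hscal a x) (hscal b x) ;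
  inner_add_l : forall x y z, inner (hadd x y) z = Cadd (inner x z) (inner y z) ;
  inner_scal_l : forall a x y, inner (hscal a x) y = Cmul a (inner x y) ;
  inner_conj : forall x y, inner y x = Cconj (inner x y) ;
  inner_pos : forall x, 0 <= re (inner x x) ;
  inner_def : forall x, inner x x = C0 -> x = hzero ;
  complete : forall u : nat -> carrier,
    (forall eps, 0 < eps -> exists N, forall m n, (N <= m)%nat -> (N <= n)%nat ->
        sqrt (re (inner (hadd (u m) (hopp (u n))) (hadd (u m) (hopp (u n))))) < eps) ->
    exists x, forall eps, 0 < eps -> exists N, forall n, (N <= n)%nat ->
        sqrt (re (inner (hadd (u n) (hopp x)) (hadd (u n) (hopp x)))) < eps
}.

Arguments hzero {h}.
Arguments hadd {h}.
Arguments hopp {h}.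
Arguments hscal {h}.
Arguments inner {h}.

Definition hsub {H : HilbertSpace} (x y : H) : H := hadd x (hopp y).
Definition hnorm {H : HilbertSpace} (x : H) : R := sqrt (re (inner x x)).

Definition converges {H : HilbertSpace} (u : nat -> H) (x : H) : Prop :=
  forall eps, 0 < eps -> exists N, forall n, (N <= n)%nat -> hnorm (hsub (u n) x) < eps.

Definition separable (H : HilbertSpace) : Prop :=
  exists d : nat -> H, forall (x : H) eps, 0 < eps -> exists n, hnorm (hsub x (d n)) < eps.

Definition is_subspace {H : HilbertSpace} (P : H -> Prop) : Prop :=
  P hzero /\ (forall x y, P x -> P y -> P (hadd x y)) /\
  (forall a x, P x -> P (hscal a x)).

Definition lin_on {H K : HilbertSpace} (P : H -> Prop) (T : H -> K) : Prop :=
  forall a b x y, P x -> P y ->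
    T (hadd (hscal a x) (hscal b y)) = hadd (hscal a (T x)) (hscal b (T y)).

Definition bounded_op {K : HilbertSpace} (B : K -> K) : Prop :=
  lin_on (fun _ => True) B /\ exists M, forall x, hnorm (B x) <= M * hnorm x.

(* An (unbounded) linear operator in H: domain D and action T (meaningful on D). *)
Definition lin_operator {H : HilbertSpace} (D : H -> Prop) (T : H -> H) : Prop :=
  is_subspace D /\ lin_on D T.

Definition densely_defined {H : HilbertSpace} (D : H -> Prop) : Prop :=
  forall (x : H) eps, 0 < eps -> exists y, D y /\ hnorm (hsub x y) < eps.

Definition closed_op {H : HilbertSpace} (D : H -> Prop) (T : H -> H) : Prop :=
  forall (u : nat -> H) x y, (forall n, D (u n)) -> converges u x ->
    converges (fun n => T (u n)) y -> D x /\ T x = y.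

Definition symmetric_op {H : HilbertSpace} (D : H -> Prop) (T : H -> H) : Prop :=
  forall f g, D f -> D g -> inner (T f) g = inner f (T g).

(* graph of the adjoint S^star: S^star g = h *)
Definition adj {H : HilbertSpace} (D : H -> Prop) (T : H -> H) (g h : H) : Prop :=
  forall f, D f -> inner (T f) g = inner f h.

Definition adj_dom {H : HilbertSpace} (D : H -> Prop) (T : H -> H) (g : H) : Prop :=
  exists h, adj D T g h.

(* defect subspace N_lambda = ker (S^* - lambda I) *)
Definition defect {H : HilbertSpace} (D : H -> Prop) (T : H -> H) (l : Cplx) (g : H) : Prop :=
  adj D T g (hscal l g).

Fixpoint lincomb {H : HilbertSpace} {I : Type} (e : I -> H) (l : list (Cplx * I)) : H :=
  match l with
  | nil => hzero
  | cons (a, i) rest => hadd (hscal a (e i)) (lincomb e rest)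
  end.

Definition onb {H : HilbertSpace} {I : Type} (P : H -> Prop) (e : I -> H) : Prop :=
  (forall i, P (e i)) /\
  (forall i, inner (e i) (e i) = C1) /\
  (forall i j, i <> j -> inner (e i) (e j) = C0) /\
  (forall x, P x -> forall eps, 0 < eps -> exists l, hnorm (hsub x (lincomb e l)) < eps).

(* dim P = dim Q : both have orthonormal bases of the same cardinality *)
Definition same_dim {H : HilbertSpace} (P Q : H -> Prop) : Prop :=
  exists (I : Type) (e f : I -> H), onb P e /\ onb Q f.

Definition nonzero_sub {H : HilbertSpace} (P : H -> Prop) : Prop :=
  exists x, P x /\ x <> hzero.

Definition equal_nonzero_defect {H : HilbertSpace} (D : H -> Prop) (T : H -> H) : Prop :=
  same_dim (defect D T Ci) (defect D T (Copp Ci)) /\ nonzero_sub (defect D T Ci).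

Definition boundary_triplet {H : HilbertSpace} (D : H -> Prop) (T : H -> H)
    (K : HilbertSpace) (Gm Gp : H -> K) : Prop :=
  lin_on (adj_dom D T) Gm /\ lin_on (adj_dom D T) Gp /\
  (forall f f' g g', adj D T f f' -> adj D T g g' ->
     Csub (inner f' g) (inner f g') =
     Cmul Ci (Csub (inner (Gp f) (Gp g)) (inner (Gm f) (Gm g)))) /\
  (forall a b : K, exists f, adj_dom D T f /\ Gm f = a /\ Gp f = b).

Definition domA {H : HilbertSpace} (D : H -> Prop) (T : H -> H) (l : Cplx) (f : H) : Prop :=
  exists g h, D g /\ defect D T l h /\ f = hadd g h.

Definition char_fun {H : HilbertSpace} (D : H -> Prop) (T : H -> H)
    (K : HilbertSpace) (Gm Gp : H -> K) (Theta : Cplx -> K -> K) : Prop :=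
  forall l, Cplus l ->
    bounded_op (Theta l) /\
    (forall f, domA D T l f <-> (adj_dom D T f /\ Theta l (Gp f) = Gm f)).

Definition phillips {H : HilbertSpace} (D : H -> Prop) (T : H -> H) : Prop :=
  lin_operator D T /\ densely_defined D /\ closed_op D T /\ symmetric_op D T /\
  equal_nonzero_defect D T /\
  exists (K : HilbertSpace) (Gm Gp : H -> K) (Theta : Cplx -> K -> K),
    boundary_triplet D T K Gm Gp /\ char_fun D T K Gm Gp Theta /\
    (forall l m, Cplus l -> Cplus m -> forall x, Theta l x = Theta m x).

(* Main.v *)
Require Import Defs.
From Stdlib Require Import Reals List Lra Psatz.
From Stdlib Require Import Classical ClassicalEpsilon ProofIrrelevance.
Open Scope R_scope.
Notation C1 := Defs.C1.
Notation C0 := Defs.C0.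

Arguments hadd_assoc {h}. Arguments hadd_comm {h}. Arguments hadd_0 {h}. Arguments hadd_opp {h}.
Arguments hscal_1 {h}. Arguments hscal_assoc {h}. Arguments hscal_distr_v {h}. Arguments hscal_distr_s {h}.
Arguments inner_add_l {h}. Arguments inner_scal_l {h}. Arguments inner_conj {h}. Arguments inner_pos {h}.
Arguments inner_def {h}. Arguments complete {h}.

Lemma Ceq (a b : Cplx) : re a = re b -> im a = im b -> a = b.
Proof. destruct a, b; simpl; intros -> ->; reflexivity. Qed.

Ltac cunfold := unfold Csub, Cadd, Copp, Cmul, Cconj, C0, C1, Ci in *; simpl in *.
Ltac cring := apply Ceq; cunfold; first [ring | field | lra].

Section Basic.
Context {H : HilbertSpace}.

Lemma hadd_0l (x : H) : hadd hzero x = x.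
Proof. rewrite hadd_comm; apply hadd_0. Qed.

Lemma hadd_cancel (x y z : H) : hadd x y = hadd x z -> y = z.
Proof.
  intro E. assert (E2: hadd (hopp x) (hadd x y) = hadd (hopp x) (hadd x z)) by (rewrite E; auto).
  rewrite !hadd_assoc, (hadd_comm (hopp x) x), hadd_opp, !hadd_0l in E2. exact E2.
Qed.

Lemma hscal_C0 (x : H) : hscal C0 x = hzero.
Proof.
  apply (hadd_cancel (hscal C0 x)). rewrite hadd_0, <- hscal_distr_s.
  f_equal. cring.
Qed.

Lemma inner_0_l (y : H) : inner hzero y = C0.
Proof.
  rewrite <- (hscal_C0 hzero), inner_scal_l. cring.
Qed.

Lemma inner_add_r (x y z : H) : inner x (hadd y z) = Cadd (inner x y) (inner x z).
Proof.
  rewrite inner_conj, inner_add_l, (inner_conj y x), (inner_conj z x). cring.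
Qed.

Lemma inner_scal_r (a : Cplx) (x y : H) : inner x (hscal a y) = Cmul (Cconj a) (inner x y).
Proof.
  rewrite inner_conj, inner_scal_l, (inner_conj y x). cring.
Qed.

Lemma inner_0_r (y : H) : inner y hzero = C0.
Proof. rewrite inner_conj, inner_0_l. cring. Qed.

Lemma hopp_scal (x : H) : hopp x = hscal (Copp C1) x.
Proof.
  apply (hadd_cancel x). rewrite hadd_opp.
  rewrite <- (hscal_C0 x). replace (hscal C0 x) with (hscal (Cadd C1 (Copp C1)) x) by (f_equal; cring).
  rewrite hscal_distr_s, hscal_1. reflexivity.
Qed.

Lemma inner_opp_l (x y : H) : inner (hopp x) y = Copp (inner x y).
Proof. rewrite hopp_scal, inner_scal_l. cring. Qed.
Lemma inner_opp_r (x y : H) : inner x (hopp y) = Copp (inner x y).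
Proof. rewrite hopp_scal, inner_scal_r. cring. Qed.
Lemma inner_sub_l (x y z : H) : inner (hsub x y) z = Csub (inner x z) (inner y z).
Proof. unfold hsub. rewrite inner_add_l, inner_opp_l. cring. Qed.
Lemma inner_sub_r (x y z : H) : inner z (hsub x y) = Csub (inner z x) (inner z y).
Proof. unfold hsub. rewrite inner_add_r, inner_opp_r. cring. Qed.

Lemma im_inner_self (x : H) : im (inner x x) = 0.
Proof.
  pose proof (inner_conj x x) as E. apply (f_equal im) in E. unfold Cconj in E; simpl in E. lra.
Qed.

Lemma inner_self_zero (x : H) : re (inner x x) = 0 -> x = hzero.
Proof.
  intro E. apply inner_def. apply Ceq; simpl; auto. apply im_inner_self.
Qed.

Lemma hext (x y : H) : (forall z, inner x z = inner y z) -> x = y.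
Proof.
  intro E. assert (E2 := E (hsub x y)).
  assert (inner (hsub x y) (hsub x y) = C0).
  { rewrite inner_sub_l, E2. cring. }
  assert (hsub x y = hzero) by (apply inner_def; auto).
  apply (hadd_cancel (hopp y)). unfold hsub in H1. rewrite hadd_comm, H1.
  rewrite hadd_comm, hadd_opp; auto.
Qed.

End Basic.

Ltac hexpand := repeat progress rewrite ?inner_add_l, ?inner_scal_l, ?inner_opp_l, ?inner_sub_l, ?inner_0_l,
   ?inner_add_r, ?inner_scal_r, ?inner_opp_r, ?inner_sub_r, ?inner_0_r.
Ltac hexpand_in h := repeat progress rewrite ?inner_add_l, ?inner_scal_l, ?inner_opp_l, ?inner_sub_l, ?inner_0_l,
   ?inner_add_r, ?inner_scal_r, ?inner_opp_r, ?inner_sub_r, ?inner_0_r in h.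
Ltac hring := apply hext; let z := fresh "z" in intro z; unfold hsub; hexpand; cring.

Section Test.
Context {H : HilbertSpace}.
Lemma test (x y : H) a : hscal a (hsub x y) = hadd (hscal a x) (hopp (hscal a y)).
Proof. hring. Qed.
End Test.

Definition RC (r : R) : Cplx := mkC r 0.
Definition Cmod (a : Cplx) : R := sqrt (re a * re a + im a * im a).

Section Norm.
Context {H : HilbertSpace}.
Definition nsq (x : H) := re (inner x x).

Lemma nsq_ge0 (x : H) : 0 <= nsq x.
Proof. apply inner_pos. Qed.

Lemma hnorm_ge0 (x : H) : 0 <= hnorm x.
Proof. apply sqrt_pos. Qed.

Lemma hnorm_sq (x : H) : hnorm x * hnorm x = nsq x.
Proof. unfold hnorm. apply sqrt_sqrt, nsq_ge0. Qed.

Lemma nsq_scal (a : Cplx) (x : H) : nsq (hscal a x) = (re a * re a + im a * im a) * nsq x.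
Proof.
  unfold nsq. hexpand. pose proof (im_inner_self x). cunfold. rewrite H0. ring.
Qed.

Lemma hnorm_scal (a : Cplx) (x : H) : hnorm (hscal a x) = Cmod a * hnorm x.
Proof.
  unfold hnorm, Cmod. fold (nsq (hscal a x)). rewrite nsq_scal. rewrite sqrt_mult_alt; auto.
  nra.
Qed.

Lemma nsq_add (x y : H) : nsq (hadd x y) = nsq x + nsq y + 2 * re (inner x y).
Proof.
  unfold nsq. hexpand. rewrite (inner_conj y x). cunfold. ring.
Qed.

Lemma hnorm_zero (x : H) : hnorm x = 0 -> x = hzero.
Proof.
  intro E. apply inner_self_zero. fold (nsq x). rewrite <- hnorm_sq, E. ring.
Qed.

Lemma hnorm_0 : hnorm (@hzero H) = 0.
Proof. unfold hnorm. rewrite inner_0_l. unfold C0; simpl. apply sqrt_0. Qed.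

Lemma sqrt_bound (r A B : R) : 0 <= A -> 0 <= B -> r * r <= A * B -> Rabs r <= sqrt A * sqrt B.
Proof.
  intros. rewrite <- sqrt_mult_alt; auto. rewrite <- sqrt_Rsqr_abs. apply sqrt_le_1_alt.
  unfold Rsqr. lra.
Qed.

Lemma CS_re (x y : H) : Rabs (re (inner x y)) <= hnorm x * hnorm y.
Proof.
  apply sqrt_bound; try apply nsq_ge0.
  destruct (Req_dec (nsq y) 0) as [E|E].
  - apply inner_self_zero in E. subst. rewrite inner_0_r. unfold C0; simpl.
    rewrite inner_0_l; unfold C0; simpl; nra.
  - set (r := re (inner x y)). set (t := - r / nsq y).
    pose proof (nsq_ge0 (hadd x (hscal (RC t) y))) as P.
    rewrite nsq_add, nsq_scal in P. hexpand_in P. unfold RC in P; cunfold. fold r in P.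
    pose proof (nsq_ge0 y). assert (0 < nsq y) by lra.
    unfold t in P. field_simplify in P; [|lra].
    assert (0 <= (nsq x * nsq y - r * r) / nsq y) by lra.
    apply Rmult_le_compat_r with (r := nsq y) in H2; [|lra].
    change (re (inner x x)) with (nsq x); change (re (inner y y)) with (nsq y). field_simplify in H2; lra.
Qed.

Lemma CS_im (x y : H) : Rabs (im (inner x y)) <= hnorm x * hnorm y.
Proof.
  replace (im (inner x y)) with (re (inner x (hscal Ci y))).
  - rewrite <- (Rmult_1_r (hnorm x * hnorm y)).
    replace (hnorm x * hnorm y * 1) with (hnorm x * (Cmod Ci * hnorm y)).
    + rewrite <- hnorm_scal. apply CS_re.
    + unfold Cmod, Ci; simpl. replace (0*0+1*1) with 1 by ring. rewrite sqrt_1. ring.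
  - hexpand. cunfold. ring.
Qed.

Lemma htriangle (x y : H) : hnorm (hadd x y) <= hnorm x + hnorm y.
Proof.
  unfold hnorm at 1. rewrite <- (sqrt_Rsqr (hnorm x + hnorm y)).
  2:{ pose proof (hnorm_ge0 x); pose proof (hnorm_ge0 y); lra. }
  apply sqrt_le_1_alt. fold (nsq (hadd x y)). rewrite nsq_add.
  pose proof (CS_re x y). pose proof (Rle_abs (re (inner x y))).
  unfold Rsqr. rewrite <- (hnorm_sq x), <- (hnorm_sq y). nra.
Qed.

Lemma hnorm_opp (x : H) : hnorm (hopp x) = hnorm x.
Proof.
  rewrite hopp_scal, hnorm_scal. replace (Cmod (Copp C1)) with 1. ring.
  unfold Cmod; simpl. rewrite <- sqrt_1 at 1. f_equal. ring.
Qed.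

Lemma hdist_sym (x y : H) : hnorm (hsub x y) = hnorm (hsub y x).
Proof.
  replace (hsub x y) with (hopp (hsub y x)) by hring. apply hnorm_opp.
Qed.

Lemma hdist_tri (x y z : H) : hnorm (hsub x z) <= hnorm (hsub x y) + hnorm (hsub y z).
Proof.
  replace (hsub x z) with (hadd (hsub x y) (hsub y z)) by hring. apply htriangle.
Qed.

Lemma hnorm_sub_le (x y : H) : hnorm x <= hnorm y + hnorm (hsub x y).
Proof.
  replace x with (hadd y (hsub x y)) at 1 by hring. apply htriangle.
Qed.

Lemma small_zero (x : H) (K : R) : (forall eps, 0 < eps -> hnorm x <= K * eps) -> x = hzero.
Proof.
  intro Hs. apply hnorm_zero. pose proof (hnorm_ge0 x).
  destruct (Rle_lt_dec K 0).
  - specialize (Hs 1 Rlt_0_1). nra.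
  - destruct (Req_dec (hnorm x) 0); auto.
    specialize (Hs (hnorm x / (2 * K))). assert (0 < hnorm x / (2*K)).
    { apply Rdiv_lt_0_compat; lra. }
    specialize (Hs H2). replace (K * (hnorm x / (2*K))) with (hnorm x / 2) in Hs by (field; lra). lra.
Qed.

Lemma eq_small (x y : H) (K : R) : (forall eps, 0 < eps -> hnorm (hsub x y) <= K * eps) -> x = y.
Proof.
  intro Hs. apply small_zero in Hs. apply (hadd_cancel (hopp y)). rewrite (hadd_comm _ y), hadd_opp.
  rewrite hadd_comm. exact Hs.
Qed.

Lemma Csmall_zero (c : Cplx) (K : R) :
  (forall eps, 0 < eps -> Rabs (re c) <= K * eps /\ Rabs (im c) <= K * eps) -> c = C0.
Proof.
  intro Hs. assert (forall r, (forall eps, 0 < eps -> Rabs r <= K * eps) -> r = 0).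
  { intros r Hr. destruct (Rle_lt_dec K 0).
    - specialize (Hr 1 Rlt_0_1). pose proof (Rabs_pos r). assert (Rabs r = 0) by nra.
      destruct (Req_dec r 0); auto. apply Rabs_no_R0 in H2. contradiction.
    - destruct (Req_dec r 0); auto. pose proof (Rabs_pos_lt r H0).
      specialize (Hr (Rabs r / (2*K))). assert (0 < Rabs r / (2*K)) by (apply Rdiv_lt_0_compat; lra).
      specialize (Hr H2). replace (K * (Rabs r / (2*K))) with (Rabs r / 2) in Hr by (field; lra). lra. }
  apply Ceq; simpl; apply H0; intros; apply Hs; auto.
Qed.

End Norm.


Lemma Csub_eq a b : Csub a b = C0 -> a = b.
Proof. intro E. apply (f_equal re) in E as E1. apply (f_equal im) in E as E2. cunfold. apply Ceq; lra. Qed.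

Section Lim.
Context {H : HilbertSpace}.

Definition cauchy (u : nat -> H) := forall eps, 0 < eps -> exists N, forall m n, (N <= m)%nat -> (N <= n)%nat ->
   hnorm (hsub (u m) (u n)) < eps.

Lemma cauchy_conv (u : nat -> H) : cauchy u -> exists x, converges u x.
Proof. intro Hc. apply (complete u Hc). Qed.

Lemma conv_unique (u : nat -> H) x y : converges u x -> converges u y -> x = y.
Proof.
  intros Hx Hy. apply (eq_small x y 2). intros eps He.
  destruct (Hx eps He) as [N1 H1]. destruct (Hy eps He) as [N2 H2].
  specialize (H1 (N1 + N2)%nat ltac:(lia)). specialize (H2 (N1+N2)%nat ltac:(lia)).
  pose proof (hdist_tri x (u (N1+N2)%nat) y). rewrite (hdist_sym x (u _)) in H0. lra.
Qed.

Lemma conv_add (u v : nat -> H) x y : converges u x -> converges v y ->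
  converges (fun n => hadd (u n) (v n)) (hadd x y).
Proof.
  intros Hx Hy eps He. destruct (Hx (eps/2)) as [N1 H1]; [lra|]. destruct (Hy (eps/2)) as [N2 H2]; [lra|].
  exists (N1+N2)%nat. intros n Hn. specialize (H1 n ltac:(lia)). specialize (H2 n ltac:(lia)).
  replace (hsub (hadd (u n) (v n)) (hadd x y)) with (hadd (hsub (u n) x) (hsub (v n) y)) by hring.
  pose proof (htriangle (hsub (u n) x) (hsub (v n) y)). lra.
Qed.

Lemma conv_scal (u : nat -> H) x a : converges u x -> converges (fun n => hscal a (u n)) (hscal a x).
Proof.
  intros Hx eps He. destruct (Hx (eps / (Cmod a + 1))) as [N1 H1].
  { apply Rdiv_lt_0_compat; auto. pose proof (sqrt_pos (re a * re a + im a * im a)). unfold Cmod; lra. }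
  exists N1. intros n Hn. specialize (H1 n Hn).
  replace (hsub (hscal a (u n)) (hscal a x)) with (hscal a (hsub (u n) x)) by hring.
  rewrite hnorm_scal. assert (0 <= Cmod a) by apply sqrt_pos.
  pose proof (hnorm_ge0 (hsub (u n) x)).
  apply Rmult_lt_compat_r with (r := Cmod a + 1) in H1; [|lra].
  unfold Rdiv in H1. rewrite Rmult_assoc, Rinv_l in H1; nra.
Qed.

Lemma conv_approx (u : nat -> H) x : converges u x -> forall eps, 0 < eps -> exists n, hnorm (hsub x (u n)) < eps.
Proof.
  intros Hx eps He. destruct (Hx eps He) as [N HN]. exists N. rewrite hdist_sym. apply HN. lia.
Qed.

End Lim.

Section Op.
Context {H : HilbertSpace} (D : H -> Prop) (T : H -> H).
Context (HL : lin_operator D T) (HS : symmetric_op D T) (Hdense : densely_defined D).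

Lemma Dzero : D hzero.
Proof. apply HL. Qed.
Lemma Dhadd x y : D x -> D y -> D (hadd x y).
Proof. apply HL. Qed.
Lemma Dhscal a x : D x -> D (hscal a x).
Proof. apply HL. Qed.
Lemma Dhsub x y : D x -> D y -> D (hsub x y).
Proof. intros. unfold hsub. rewrite hopp_scal. apply Dhadd; auto. apply Dhscal; auto. Qed.

Lemma Tlin a b x y : D x -> D y -> T (hadd (hscal a x) (hscal b y)) = hadd (hscal a (T x)) (hscal b (T y)).
Proof. apply HL. Qed.

Lemma Tadd x y : D x -> D y -> T (hadd x y) = hadd (T x) (T y).
Proof. intros. pose proof (Tlin C1 C1 x y H0 H1). rewrite !hscal_1 in H2. auto. Qed.
Lemma Tscal a x : D x -> T (hscal a x) = hscal a (T x).
Proof. intros. pose proof (Tlin a C0 x x H0 H0). rewrite !hscal_C0, !hadd_0 in H1. auto. Qed.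
Lemma Tsub x y : D x -> D y -> T (hsub x y) = hsub (T x) (T y).
Proof. intros. unfold hsub. rewrite hopp_scal, Tadd, Tscal, <- hopp_scal; auto. apply Dhscal; auto. Qed.

Lemma adj_fun g h1 h2 : adj D T g h1 -> adj D T g h2 -> h1 = h2.
Proof.
  intros A1 A2. set (w := hsub h1 h2).
  assert (Hw : forall f, D f -> inner f w = C0).
  { intros f Hf. unfold w. rewrite inner_sub_r, <- (A1 f Hf), <- (A2 f Hf). cring. }
  assert (w = hzero).
  { apply (small_zero w 1). intros eps He. destruct (Hdense w eps He) as [f [Hf Hd]].
    assert (E : re (inner w w) = re (inner (hsub w f) w)).
    { rewrite inner_sub_l, (Hw f Hf). cunfold. ring. }
    pose proof (CS_re (hsub w f) w). pose proof (Rle_abs (re (inner (hsub w f) w))).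
    pose proof (hnorm_sq w). unfold nsq in H2. pose proof (hnorm_ge0 w). pose proof (hnorm_ge0 (hsub w f)).
    nra. }
  apply (hadd_cancel (hopp h2)). unfold w, hsub in H0. rewrite hadd_comm, H0, hadd_comm, hadd_opp. auto.
Qed.

Lemma adj_D g : D g -> adj D T g (T g).
Proof. intros Hg f Hf. apply HS; auto. Qed.

Lemma adj_lin a b g h g' h' : adj D T g h -> adj D T g' h' ->
  adj D T (hadd (hscal a g) (hscal b g')) (hadd (hscal a h) (hscal b h')).
Proof.
  intros A1 A2 f Hf. hexpand. rewrite (A1 f Hf), (A2 f Hf). reflexivity.
Qed.

Lemma adj_ext g h g' h' : adj D T g h -> g = g' -> h = h' -> adj D T g' h'.
Proof. intros; subst; auto. Qed.

Lemma adj_add g h g' h' : adj D T g h -> adj D T g' h' -> adj D T (hadd g g') (hadd h h').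
Proof. intros. eapply adj_ext. apply (adj_lin C1 C1 g h g' h'); auto. all: rewrite !hscal_1; auto. Qed.
Lemma adj_scal a g h : adj D T g h -> adj D T (hscal a g) (hscal a h).
Proof. intros. eapply adj_ext. apply (adj_lin a C0 g h g h); auto. all: rewrite !hscal_C0, hadd_0; auto. Qed.
Lemma adj_sub g h g' h' : adj D T g h -> adj D T g' h' -> adj D T (hsub g g') (hsub h h').
Proof.
  intros. unfold hsub. rewrite !hopp_scal. apply adj_add; auto. apply adj_scal; auto.
Qed.
Lemma adj_0 : adj D T hzero hzero.
Proof. intros f Hf. rewrite inner_0_r, inner_0_r. auto. Qed.

Lemma defect_sub l : is_subspace (defect D T l).
Proof.
  split; [|split].
  - unfold defect. eapply adj_ext. apply adj_0. auto. hring.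
  - intros x y Hx Hy. unfold defect in *. eapply adj_ext. apply (adj_add _ _ _ _ Hx Hy). auto.
    rewrite hscal_distr_v; auto.
  - intros a x Hx. unfold defect in *. eapply adj_ext. apply (adj_scal a _ _ Hx). auto.
    rewrite !hscal_assoc. f_equal. cring.
Qed.

Lemma defect_closed l y : (forall eps, 0 < eps -> exists z, defect D T l z /\ hnorm (hsub y z) < eps) ->
  defect D T l y.
Proof.
  intros Hc f Hf. apply Csub_eq.
  unfold defect in *.
  { apply (Csmall_zero _ (hnorm (T f) + hnorm f * Cmod l)). intros eps He.
    destruct (Hc eps He) as [z [Hz Hd]].
    assert (Ez : Csub (inner (T f) y) (inner f (hscal l y)) =
                 Csub (inner (T f) (hsub y z)) (inner f (hscal l (hsub y z)))).
    { assert (Hz' := Hz f Hf). hexpand. hexpand_in Hz'. rewrite Hz'. cring. }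
    rewrite Ez. pose proof (CS_re (T f) (hsub y z)). pose proof (CS_im (T f) (hsub y z)).
    pose proof (CS_re f (hscal l (hsub y z))). pose proof (CS_im f (hscal l (hsub y z))).
    rewrite hnorm_scal in H2, H3. cunfold.
    pose proof (hnorm_ge0 (T f)). pose proof (hnorm_ge0 f). assert (0 <= Cmod l) by apply sqrt_pos.
    assert (A: hnorm (T f) * hnorm (hsub y z) <= hnorm (T f) * eps) by (apply Rmult_le_compat_l; lra).
    assert (B: hnorm f * (Cmod l * hnorm (hsub y z)) <= hnorm f * (Cmod l * eps))
      by (apply Rmult_le_compat_l; [lra|apply Rmult_le_compat_l; lra]).
    split; (eapply Rle_trans; [apply Rabs_triang|]); rewrite Rabs_Ropp; lra. }
Qed.

End Op.


Lemma inv_small (d : R) : 0 < d -> exists N, forall n, (N <= n)%nat -> / (INR n + 1) < d.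
Proof.
  intros Hd. destruct (archimed_cor1 d Hd) as [N [HN HN0]]. exists N. intros n Hn.
  apply le_INR in Hn. assert (0 < INR N) by (apply lt_0_INR; auto).
  eapply Rle_lt_trans; [|exact HN]. apply Rinv_le_contravar; lra.
Qed.

Lemma hnorm_lt {H : HilbertSpace} (x : H) eps : 0 < eps -> nsq x < eps * eps -> hnorm x < eps.
Proof.
  intros He Hx. unfold hnorm. rewrite <- (sqrt_square eps) by lra. apply sqrt_lt_1_alt.
  split; [apply nsq_ge0|exact Hx].
Qed.

Lemma hnorm_le_nsq {H : HilbertSpace} (x y : H) : nsq x <= nsq y -> hnorm x <= hnorm y.
Proof. intro. apply sqrt_le_1_alt. exact H0. Qed.

Lemma choice_nat {A : Type} (P : nat -> A -> Prop) : (forall n, exists a, P n a) -> exists f, forall n, P n (f n).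
Proof.
  intro Hx. exists (fun n => proj1_sig (constructive_indefinite_description _ (Hx n))).
  intro n. exact (proj2_sig (constructive_indefinite_description _ (Hx n))).
Qed.

Section Proj.
Context {H : HilbertSpace}.

Lemma conv_cauchy (u : nat -> H) x : converges u x -> cauchy u.
Proof.
  intros Hx eps He. destruct (Hx (eps/2)) as [N HN]; [lra|]. exists N. intros m n Hm Hn.
  pose proof (hdist_tri (u m) x (u n)). rewrite (hdist_sym x (u n)) in H0.
  specialize (HN m Hm) as A. specialize (HN n Hn). lra.
Qed.

Definition hclosed_set (M : H -> Prop) := forall u y, (forall n, M (u n)) -> converges u y -> M y.

Lemma projection (M : H -> Prop) : is_subspace M -> hclosed_set M ->
  forall y, exists m, M m /\ forall m', M m' -> inner m' (hsub y m) = C0.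
Proof.
  intros [M0 [Madd Mscal]] Mcl y.
  set (E := fun r => exists m, M m /\ r = - hnorm (hsub y m)).
  assert (Eb : bound E). { exists 0. intros r [m [_ ->]]. pose proof (hnorm_ge0 (hsub y m)). lra. }
  assert (Ene : exists r, E r). { exists (- hnorm (hsub y hzero)). exists hzero. auto. }
  destruct (completeness E Eb Ene) as [s [Hub Hlub]].
  set (d := - s).
  assert (Hlow : forall m, M m -> d <= hnorm (hsub y m)).
  { intros m Hm. assert (E (- hnorm (hsub y m))) by (exists m; auto). apply Hub in H0. unfold d. lra. }
  assert (Happ : forall e, 0 < e -> exists m, M m /\ hnorm (hsub y m) < d + e).
  { intros e He. apply NNPP. intro Hn.
    assert (is_upper_bound E (s - e)).
    { intros r [m [Hm ->]]. apply Rnot_lt_le. intro Hlt. apply Hn. exists m. split; auto. unfold d. lra. }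
    apply Hlub in H0. lra. }
  assert (Hd0 : 0 <= d).
  { destruct (Happ 1 Rlt_0_1) as [m [Hm _]]. pose proof (Hlow m Hm).
    assert (E (- hnorm (hsub y hzero))) by (exists hzero; auto).
    apply Hub in H1. pose proof (hnorm_ge0 (hsub y hzero)).
    assert (is_upper_bound E 0). { intros r [m' [_ ->]]. pose proof (hnorm_ge0 (hsub y m')). lra. }
    apply Hlub in H3. unfold d. lra. }
  destruct (choice_nat (fun n m => M m /\ hnorm (hsub y m) < d + / (INR n + 1))) as [mm Hmm].
  { intro n. apply Happ. apply Rinv_0_lt_compat. pose proof (pos_INR n). lra. }
  (* parallelogram bound *)
  assert (Hpar : forall p q, nsq (hsub (mm p) (mm q)) <=
       2 * (d + / (INR p + 1)) * (d + / (INR p + 1)) + 2 * (d + / (INR q + 1)) * (d + / (INR q + 1)) - 4 * d * d).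
  { intros p q. set (a := hsub y (mm p)). set (b := hsub y (mm q)).
    set (mid := hscal (RC (/2)) (hadd (mm p) (mm q))).
    assert (Mmid : M mid) by (apply Mscal, Madd; apply Hmm).
    pose proof (Hlow mid Mmid) as Hm1.
    assert (Id : nsq (hsub (mm p) (mm q)) = 2 * nsq a + 2 * nsq b - 4 * nsq (hsub y mid)).
    { unfold nsq, a, b, mid, RC. hexpand. cunfold. field. }
    rewrite Id. destruct (Hmm p) as [_ Hp]. destruct (Hmm q) as [_ Hq].
    pose proof (hnorm_ge0 a). pose proof (hnorm_ge0 b). pose proof (hnorm_ge0 (hsub y mid)).
    rewrite <- (hnorm_sq a), <- (hnorm_sq b), <- (hnorm_sq (hsub y mid)).
    fold a in Hp. fold b in Hq.
    assert (hnorm a * hnorm a <= (d + / (INR p + 1)) * (d + / (INR p + 1))) by (apply Rmult_le_compat; lra).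
    assert (hnorm b * hnorm b <= (d + / (INR q + 1)) * (d + / (INR q + 1))) by (apply Rmult_le_compat; lra).
    assert (d * d <= hnorm (hsub y mid) * hnorm (hsub y mid)) by (apply Rmult_le_compat; lra).
    lra. }
  assert (Hc : cauchy mm).
  { intros eps He. set (del := Rmin 1 (eps * eps / (8 * d + 5))).
    assert (Hdel : 0 < del). { unfold del. apply Rmin_pos; [lra|]. apply Rdiv_lt_0_compat; nra. }
    destruct (inv_small del Hdel) as [N HN]. exists N. intros m n Hm Hn.
    apply hnorm_lt; auto. eapply Rle_lt_trans; [apply Hpar|].
    specialize (HN m Hm) as A. specialize (HN n Hn).
    assert (del <= 1) by apply Rmin_l. assert (del <= eps * eps / (8 * d + 5)) by apply Rmin_r.
    assert (0 < / (INR m + 1)) by (apply Rinv_0_lt_compat; pose proof (pos_INR m); lra).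
    assert (0 < / (INR n + 1)) by (apply Rinv_0_lt_compat; pose proof (pos_INR n); lra).
    assert (del * (8 * d + 5) <= eps * eps).
    { apply Rmult_le_compat_r with (r := 8*d+5) in H1; [|lra]. unfold Rdiv in H1.
      rewrite Rmult_assoc, Rinv_l in H1; lra. }
    nra. }
  destruct (cauchy_conv mm Hc) as [ms Hms].
  assert (Mms : M ms) by (apply (Mcl mm); auto; intro; apply Hmm).
  assert (Hmin : forall m', M m' -> nsq (hsub y ms) <= nsq (hsub y m')).
  { intros m' Hm'. pose proof (Hlow m' Hm').
    assert (hnorm (hsub y ms) <= d).
    { apply Rnot_lt_le. intro Hlt. set (e := (hnorm (hsub y ms) - d) / 3).
      assert (0 < e) by (unfold e; lra).
      destruct (Hms e H1) as [N1 HN1]. destruct (inv_small e H1) as [N2 HN2].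
      specialize (HN1 (N1+N2)%nat ltac:(lia)). specialize (HN2 (N1+N2)%nat ltac:(lia)).
      destruct (Hmm (N1+N2)%nat) as [_ Hb].
      pose proof (hdist_tri y (mm (N1+N2)%nat) ms). unfold e in *. lra. }
    rewrite <- (hnorm_sq (hsub y ms)), <- (hnorm_sq (hsub y m')).
    pose proof (hnorm_ge0 (hsub y ms)). apply Rmult_le_compat; lra. }
  exists ms. split; auto. intros z Hz.
  set (w := hsub y ms). set (c := inner w z). set (nz := nsq z).
  set (sv := / (nz + 1)).
  assert (Hnz : 0 <= nz) by apply nsq_ge0.
  assert (Hs : 0 < sv) by (apply Rinv_0_lt_compat; lra).
  assert (Hsnz : sv * nz < 1).
  { unfold sv. apply (Rmult_lt_reg_r (nz + 1)); [lra|]. rewrite Rmult_assoc, (Rmult_comm nz), <- Rmult_assoc, Rinv_l; lra. }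
  set (t := Cmul (RC sv) c).
  assert (Mt : M (hadd ms (hscal t z))) by (apply Madd; auto).
  specialize (Hmin _ Mt).
  assert (Hid : nsq (hsub y (hadd ms (hscal t z))) - nsq (hsub y ms) =
                (re c * re c + im c * im c) * (- 2 * sv + sv * sv * nz)).
  { unfold nz, t, c, w, RC, nsq. hexpand. rewrite (inner_conj z y), (inner_conj z ms).
    pose proof (im_inner_self z). cunfold. rewrite H0. ring. }
  assert (re c * re c + im c * im c = 0).
  { assert (0 <= re c * re c + im c * im c) by nra.
    assert (- 2 * sv + sv * sv * nz < 0) by nra. nra. }
  assert (re c = 0) by nra. assert (im c = 0) by nra.
  rewrite inner_conj. fold w. fold c. apply Ceq; cunfold; lra.
Qed.

End Proj.


Section Dec.
Context {H : HilbertSpace} (D : H -> Prop) (T : H -> H).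
Context (HL : lin_operator D T) (HS : symmetric_op D T) (Hdense : densely_defined D) (Hcl : closed_op D T).

Definition Mran (y : H) := exists g, D g /\ y = hadd (T g) (hscal Ci g).

Lemma Mran_sub : is_subspace Mran.
Proof.
  split; [|split].
  - exists hzero. split. apply (Dzero D T HL). rewrite <- (hscal_C0 hzero) at 2 3.
    rewrite (Tscal D T HL); [|apply (Dzero D T HL)]. hring.
  - intros x y [g [Hg ->]] [g' [Hg' ->]]. exists (hadd g g'). split. apply (Dhadd D T HL); auto.
    rewrite (Tadd D T HL); auto. hring.
  - intros a x [g [Hg ->]]. exists (hscal a g). split. apply (Dhscal D T HL); auto.
    rewrite (Tscal D T HL); auto. hring.
Qed.

Lemma nsq_Ti g : D g -> nsq (hadd (T g) (hscal Ci g)) = nsq (T g) + nsq g.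
Proof.
  intro Hg. rewrite nsq_add, nsq_scal. assert (E := HS g g Hg Hg).
  rewrite inner_scal_r. rewrite (inner_conj (T g) g) in E. apply (f_equal im) in E.
  cunfold. lra.
Qed.

Lemma Mran_closed : hclosed_set Mran.
Proof.
  intros u y Hu Hy.
  destruct (choice_nat (fun n g => D g /\ u n = hadd (T g) (hscal Ci g)) Hu) as [g Hg].
  assert (Hdiff : forall m n, hsub (u m) (u n) = hadd (T (hsub (g m) (g n))) (hscal Ci (hsub (g m) (g n)))).
  { intros m n. destruct (Hg m) as [Dm Em]. destruct (Hg n) as [Dn En]. rewrite Em, En.
    rewrite (Tsub D T HL); auto. hring. }
  assert (Hb : forall m n, nsq (hsub (g m) (g n)) <= nsq (hsub (u m) (u n)) /\
                           nsq (hsub (T (g m)) (T (g n))) <= nsq (hsub (u m) (u n))).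
  { intros m n. rewrite Hdiff, nsq_Ti. rewrite (Tsub D T HL). pose proof (nsq_ge0 (hsub (g m) (g n))).
    pose proof (nsq_ge0 (hsub (T (g m)) (T (g n)))). lra. all: try apply (Dhsub D T HL); apply Hg. }
  pose proof (conv_cauchy u y Hy) as Cu.
  assert (Cg : cauchy g).
  { intros eps He. destruct (Cu eps He) as [N HN]. exists N. intros m n Hm Hn.
    eapply Rle_lt_trans; [|apply (HN m n Hm Hn)]. apply hnorm_le_nsq. apply Hb. }
  assert (CTg : cauchy (fun n => T (g n))).
  { intros eps He. destruct (Cu eps He) as [N HN]. exists N. intros m n Hm Hn.
    eapply Rle_lt_trans; [|apply (HN m n Hm Hn)]. apply hnorm_le_nsq. apply Hb. }
  destruct (cauchy_conv _ Cg) as [x Hx]. destruct (cauchy_conv _ CTg) as [z Hz].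
  destruct (Hcl g x z (fun n => proj1 (Hg n)) Hx Hz) as [Dx Tx].
  exists x. split; auto.
  apply (conv_unique u). auto.
  assert (converges (fun n => hadd (T (g n)) (hscal Ci (g n))) (hadd z (hscal Ci x))).
  { apply conv_add; auto. apply conv_scal; auto. }
  rewrite Tx. intros eps He. destruct (H0 eps He) as [N HN]. exists N. intros n Hn.
  destruct (Hg n) as [_ ->]. apply HN; auto.
Qed.

Definition decomp (f a b c : H) := D a /\ defect D T Ci b /\ defect D T (Copp Ci) c /\ f = hadd (hadd a b) c.

Lemma decomp_exists f f' : adj D T f f' -> exists a b c, decomp f a b c.
Proof.
  intro Af. set (y := hadd f' (hscal Ci f)).
  destruct (projection Mran Mran_sub Mran_closed y) as [m [[g [Dg Em]] Horth]].
  set (w := hsub y m).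
  assert (Dw : defect D T Ci w).
  { intros phi Hphi. assert (Mran (hadd (T phi) (hscal Ci phi))) by (exists phi; auto).
    apply Horth in H0. fold w in H0. hexpand_in H0. hexpand.
    apply (f_equal re) in H0 as H1. apply (f_equal im) in H0 as H2. cunfold. apply Ceq; simpl; lra. }
  set (b := hscal (mkC 0 (-1/2)) w).
  assert (Db : defect D T Ci b) by (apply (defect_sub D T Ci); auto).
  exists g, b, (hsub (hsub f g) b).
  split; auto. split; auto. split; [|hring].
  unfold defect. eapply adj_ext.
  - exact (adj_sub D T _ _ _ _ (adj_sub D T _ _ _ _ Af (adj_D D T HS g Dg)) Db).
  - reflexivity.
  - assert (Ef' : f' = hsub (hadd (hadd (T g) (hscal Ci g)) w) (hscal Ci f)).
    { unfold w. rewrite <- Em. unfold y. hring. }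
    rewrite Ef'. unfold b. apply hext; intro z; unfold hsub; hexpand; apply Ceq; cunfold; lra.
Qed.

Lemma sub_zero (u v : H) : hadd u v = hzero -> u = hopp v.
Proof. intro E. apply (hadd_cancel v). rewrite hadd_opp, hadd_comm. auto. Qed.

Lemma sub_eq (u v : H) : hsub u v = hzero -> u = v.
Proof. intro E. apply sub_zero in E. rewrite E. hring. Qed.

Lemma dec_zero a b c : D a -> defect D T Ci b -> defect D T (Copp Ci) c -> hadd (hadd a b) c = hzero ->
  a = hzero /\ b = hzero /\ c = hzero.
Proof.
  intros Da Db Dc E.
  assert (At : adj D T (hadd (hadd a b) c) (hadd (hadd (T a) (hscal Ci b)) (hscal (Copp Ci) c))).
  { apply (adj_add D T). apply (adj_add D T). apply (adj_D D T HS); auto. exact Db. exact Dc. }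
  rewrite E in At. pose proof (adj_fun D T Hdense _ _ _ At (adj_0 D T)) as E2.
  rewrite <- hadd_assoc in E, E2. apply sub_zero in E. apply sub_zero in E2.
  assert (Ec := Dc a Da). assert (Eb := Db a Da).
  rewrite E2 in Ec, Eb. rewrite E in Ec, Eb. hexpand_in Ec. hexpand_in Eb.
  rewrite (inner_conj c b) in Ec. rewrite (inner_conj b c) in Eb.
  pose proof (im_inner_self b). pose proof (im_inner_self c).
  apply (f_equal re) in Ec as Ec1. apply (f_equal re) in Eb as Eb1.
  apply (f_equal im) in Ec as Ec2. apply (f_equal im) in Eb as Eb2.
  cunfold.
  assert (Hb0 : b = hzero) by (apply inner_self_zero; lra).
  assert (Hc0 : c = hzero) by (apply inner_self_zero; lra).
  split; [|auto]. rewrite E, Hb0, Hc0. hring.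
Qed.

Lemma decomp_unique f a b c a' b' c' : decomp f a b c -> decomp f a' b' c' ->
  a = a' /\ b = b' /\ c = c'.
Proof.
  intros [Da [Db [Dc Ef]]] [Da' [Db' [Dc' Ef']]].
  destruct (dec_zero (hsub a a') (hsub b b') (hsub c c')) as [E1 [E2 E3]].
  - apply (Dhsub D T HL); auto.
  - unfold defect. eapply adj_ext. apply (adj_sub D T); [exact Db|exact Db']. auto. hring.
  - unfold defect. eapply adj_ext. apply (adj_sub D T); [exact Dc|exact Dc']. auto. hring.
  - replace (hadd (hadd (hsub a a') (hsub b b')) (hsub c c')) with (hsub f f) by (rewrite Ef at 1; rewrite Ef'; hring).
    hring.
  - repeat split; apply sub_eq; auto.
Qed.


End Dec.


Section Unit.
Context {H : HilbertSpace} {I : Type} (e f : I -> H).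
Definition orthon (g : I -> H) := (forall i, inner (g i) (g i) = C1) /\ (forall i j, i <> j -> inner (g i) (g j) = C0).
Context (He : orthon e) (Hf : orthon f).

Lemma ef_inner i j : inner (e i) (e j) = inner (f i) (f j).
Proof.
  destruct (classic (i = j)) as [->|Hn].
  - rewrite (proj1 He), (proj1 Hf). auto.
  - rewrite (proj2 He), (proj2 Hf); auto.
Qed.

Lemma gram1 i l : inner (e i) (lincomb e l) = inner (f i) (lincomb f l).
Proof.
  induction l as [|[b j] l IH]; simpl.
  - rewrite !inner_0_r. auto.
  - rewrite !inner_add_r, !inner_scal_r, IH, ef_inner. auto.
Qed.

Lemma gram l l' : inner (lincomb e l) (lincomb e l') = inner (lincomb f l) (lincomb f l').
Proof.
  induction l as [|[a i] l IH]; simpl.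
  - rewrite !inner_0_l. auto.
  - rewrite !inner_add_l, !inner_scal_l, IH, gram1. auto.
Qed.

Definition lsc (a : Cplx) (l : list (Cplx * I)) := map (fun p => (Cmul a (fst p), snd p)) l.

Lemma lincomb_app (g : I -> H) l1 l2 : lincomb g (l1 ++ l2) = hadd (lincomb g l1) (lincomb g l2).
Proof.
  induction l1 as [|[a i] l IH]; simpl. hring. rewrite IH. hring.
Qed.

Lemma lincomb_lsc (g : I -> H) a l : lincomb g (lsc a l) = hscal a (lincomb g l).
Proof.
  induction l as [|[b i] l IH]; simpl. hring. rewrite IH. hring.
Qed.

Lemma lc_sub (g : I -> H) l l' : hsub (lincomb g l) (lincomb g l') = lincomb g (l ++ lsc (Copp C1) l').
Proof. rewrite lincomb_app, lincomb_lsc. hring. Qed.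

Lemma lc_dist l l' : hnorm (hsub (lincomb e l) (lincomb e l')) = hnorm (hsub (lincomb f l) (lincomb f l')).
Proof. rewrite !lc_sub. unfold hnorm. rewrite gram. auto. Qed.

Definition Rv (x y : H) := forall eps, 0 < eps -> exists l,
  hnorm (hsub x (lincomb f l)) < eps /\ hnorm (hsub y (lincomb e l)) < eps.

Lemma Rv_fun x y1 y2 : Rv x y1 -> Rv x y2 -> y1 = y2.
Proof.
  intros R1 R2. apply (eq_small y1 y2 4). intros eps Heps.
  destruct (R1 eps Heps) as [l1 [A1 B1]]. destruct (R2 eps Heps) as [l2 [A2 B2]].
  pose proof (hdist_tri y1 (lincomb e l1) y2). pose proof (hdist_tri (lincomb e l1) (lincomb e l2) y2).
  pose proof (lc_dist l1 l2). pose proof (hdist_tri (lincomb f l1) x (lincomb f l2)).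
  pose proof (hdist_sym (lincomb f l1) x). pose proof (hdist_sym (lincomb e l2) y2). lra.
Qed.

Lemma Rv_total x : (forall eps, 0 < eps -> exists l, hnorm (hsub x (lincomb f l)) < eps) -> exists y, Rv x y.
Proof.
  intro Ha.
  destruct (choice_nat (fun n l => hnorm (hsub x (lincomb f l)) < / (INR n + 1))) as [ll Hll].
  { intro n. apply Ha. apply Rinv_0_lt_compat. pose proof (pos_INR n). lra. }
  assert (Hc : cauchy (fun n => lincomb e (ll n))).
  { intros eps Heps. destruct (inv_small (eps/2)) as [N HN]; [lra|]. exists N. intros m n Hm Hn.
    rewrite lc_dist. pose proof (hdist_tri (lincomb f (ll m)) x (lincomb f (ll n))).
    pose proof (hdist_sym (lincomb f (ll m)) x). specialize (Hll m) as A. specialize (Hll n) as B.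
    specialize (HN m Hm) as C. specialize (HN n Hn). lra. }
  destruct (cauchy_conv _ Hc) as [y Hy]. exists y. intros eps Heps.
  destruct (Hy eps Heps) as [N1 HN1]. destruct (inv_small eps Heps) as [N2 HN2].
  exists (ll (N1+N2)%nat). split.
  - specialize (Hll (N1+N2)%nat). specialize (HN2 (N1+N2)%nat ltac:(lia)). lra.
  - rewrite hdist_sym. apply HN1. lia.
Qed.

Lemma Rv_lin a b x y x' y' : Rv x y -> Rv x' y' ->
  Rv (hadd (hscal a x) (hscal b x')) (hadd (hscal a y) (hscal b y')).
Proof.
  intros R1 R2 eps Heps.
  assert (Ca : 0 <= Cmod a) by apply sqrt_pos. assert (Cb : 0 <= Cmod b) by apply sqrt_pos.
  set (e' := eps / (Cmod a + Cmod b + 1)).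
  assert (He' : 0 < e') by (apply Rdiv_lt_0_compat; lra).
  assert (Hk : (Cmod a + Cmod b) * e' < eps).
  { unfold e'. apply (Rmult_lt_reg_r (Cmod a + Cmod b + 1)); [lra|].
    unfold Rdiv. rewrite Rmult_assoc, (Rmult_assoc eps), Rinv_l by lra. nra. }
  destruct (R1 e' He') as [l [A1 B1]]. destruct (R2 e' He') as [l' [A2 B2]].
  exists (lsc a l ++ lsc b l'). rewrite !lincomb_app, !lincomb_lsc.
  assert (G : forall (u u' v v' : H), hnorm (hsub u v) < e' -> hnorm (hsub u' v') < e' ->
     hnorm (hsub (hadd (hscal a u) (hscal b u')) (hadd (hscal a v) (hscal b v'))) < eps).
  { intros u u' v v' Hu Hu'.
    replace (hsub (hadd (hscal a u) (hscal b u')) (hadd (hscal a v) (hscal b v'))) with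
      (hadd (hscal a (hsub u v)) (hscal b (hsub u' v'))) by hring.
    eapply Rle_lt_trans. apply htriangle. rewrite !hnorm_scal.
    pose proof (hnorm_ge0 (hsub u v)). pose proof (hnorm_ge0 (hsub u' v')).
    assert (Cmod a * hnorm (hsub u v) <= Cmod a * e') by (apply Rmult_le_compat_l; lra).
    assert (Cmod b * hnorm (hsub u' v') <= Cmod b * e') by (apply Rmult_le_compat_l; lra).
    lra. }
  split; apply G; auto.
Qed.

Lemma Rv_norm x y : Rv x y -> hnorm x = hnorm y.
Proof.
  intro R1. assert (forall eps, 0 < eps -> Rabs (hnorm x - hnorm y) <= 2 * eps).
  { intros eps Heps. destruct (R1 eps Heps) as [l [A B]].
    assert (E : hnorm (lincomb e l) = hnorm (lincomb f l)).
    { unfold hnorm. rewrite gram. auto. }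
    pose proof (hnorm_sub_le x (lincomb f l)). pose proof (hnorm_sub_le (lincomb f l) x).
    pose proof (hnorm_sub_le y (lincomb e l)). pose proof (hnorm_sub_le (lincomb e l) y).
    rewrite hdist_sym in H1, H3. apply Rabs_le. lra. }
  destruct (Req_dec (hnorm x) (hnorm y)); auto. exfalso.
  assert (0 < Rabs (hnorm x - hnorm y)) by (apply Rabs_pos_lt; lra).
  specialize (H0 (Rabs (hnorm x - hnorm y) / 4)). lra.
Qed.

Lemma Rv_nsq x y : Rv x y -> nsq x = nsq y.
Proof. intro. rewrite <- !hnorm_sq, (Rv_norm x y); auto. Qed.

Lemma Rv_inner x y x' y' : Rv x y -> Rv x' y' -> inner x x' = inner y y'.
Proof.
  intros R1 R2.
  pose proof (Rv_nsq _ _ (Rv_lin C1 C1 _ _ _ _ R1 R2)) as N1.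
  pose proof (Rv_nsq _ _ (Rv_lin C1 Ci _ _ _ _ R1 R2)) as N2.
  pose proof (Rv_nsq _ _ R1). pose proof (Rv_nsq _ _ R2).
  unfold nsq in *. hexpand_in N1. hexpand_in N2.
  rewrite (inner_conj x x'), (inner_conj y y') in N1, N2.
  pose proof (im_inner_self x). pose proof (im_inner_self y). pose proof (im_inner_self x'). pose proof (im_inner_self y').
  cunfold. apply Ceq; lra.
Qed.

Lemma Rv_approx x y : Rv x y -> forall eps, 0 < eps -> exists l, hnorm (hsub y (lincomb e l)) < eps.
Proof. intros R1 eps Heps. destruct (R1 eps Heps) as [l [_ B]]. eauto. Qed.

End Unit.

Lemma Rv_swap {H : HilbertSpace} {I : Type} (e f : I -> H) x y : Rv e f x y -> Rv f e y x.
Proof. intros R1 eps Heps. destruct (R1 eps Heps) as [l [A B]]. exists l. auto. Qed.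


Section Sub.
Context {H : HilbertSpace} (P : H -> Prop) (Ps : is_subspace P)
  (Pc : forall y, (forall eps, 0 < eps -> exists z, P z /\ hnorm (hsub y z) < eps) -> P y).

Definition St := {x : H | P x}.
Lemma P0 : P hzero. Proof. apply Ps. Qed.
Lemma Padd x y : P x -> P y -> P (hadd x y). Proof. apply Ps. Qed.
Lemma Pscal a x : P x -> P (hscal a x). Proof. apply Ps. Qed.
Lemma Popp x : P x -> P (hopp x). Proof. intro. rewrite hopp_scal. apply Pscal; auto. Qed.

Definition s0 : St := exist _ hzero P0.
Definition sadd (x y : St) : St := exist _ (hadd (proj1_sig x) (proj1_sig y)) (Padd _ _ (proj2_sig x) (proj2_sig y)).
Definition sopp (x : St) : St := exist _ (hopp (proj1_sig x)) (Popp _ (proj2_sig x)).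
Definition sscal (a : Cplx) (x : St) : St := exist _ (hscal a (proj1_sig x)) (Pscal a _ (proj2_sig x)).
Definition sinner (x y : St) : Cplx := inner (proj1_sig x) (proj1_sig y).

Lemma subeq (x y : St) : proj1_sig x = proj1_sig y -> x = y.
Proof. destruct x as [x px], y as [y py]; simpl; intros ->. f_equal. apply proof_irrelevance. Qed.

Definition subHS : HilbertSpace.
Proof.
  refine (@Build_HilbertSpace St s0 sadd sopp sscal sinner _ _ _ _ _ _ _ _ _ _ _ _ _ _).
  - intros; apply subeq; simpl; apply hadd_assoc.
  - intros; apply subeq; simpl; apply hadd_comm.
  - intros; apply subeq; simpl; apply hadd_0.
  - intros; apply subeq; simpl; apply hadd_opp.
  - intros; apply subeq; simpl; apply hscal_1.
  - intros; apply subeq; simpl; apply hscal_assoc.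
  - intros; apply subeq; simpl; apply hscal_distr_v.
  - intros; apply subeq; simpl; apply hscal_distr_s.
  - intros; unfold sinner; simpl; apply inner_add_l.
  - intros; unfold sinner; simpl; apply inner_scal_l.
  - intros; unfold sinner; simpl; apply inner_conj.
  - intros; unfold sinner; simpl; apply inner_pos.
  - intros x Hx; apply subeq; simpl; apply inner_def; exact Hx.
  - intros u Hu.
    destruct (complete (fun n => proj1_sig (u n)) Hu) as [x Hx].
    assert (Px : P x).
    { apply Pc. intros eps Heps. destruct (Hx eps Heps) as [N HN]. exists (proj1_sig (u N)).
      split. apply proj2_sig. rewrite hdist_sym. apply HN. auto. }
    exists (exist _ x Px). exact Hx.
Defined.

Lemma subHS_inner (x y : subHS) : inner x y = inner (proj1_sig (x : St)) (proj1_sig (y : St)).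
Proof. reflexivity. Qed.

End Sub.


Lemma lincomb_in {H : HilbertSpace} {I : Type} (P : H -> Prop) (g : I -> H) :
  is_subspace P -> (forall i, P (g i)) -> forall l, P (lincomb g l).
Proof.
  intros [P0 [Pa Ps]] Hg l. induction l as [|[a i] l IH]; simpl; auto.
Qed.

Lemma onb_orthon {H : HilbertSpace} {I : Type} (P : H -> Prop) (g : I -> H) : onb P g -> orthon g.
Proof. intros [_ [A [B _]]]. split; auto. Qed.

Lemma Rv_zero {H : HilbertSpace} {I : Type} (e f : I -> H) : Rv e f hzero hzero.
Proof.
  intros eps Heps. exists nil. simpl. replace (hsub (@hzero H) hzero) with (@hzero H) by hring.
  rewrite hnorm_0. auto.
Qed.

Section Main.
Context {H : HilbertSpace} (D : H -> Prop) (T : H -> H).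
Context (HL : lin_operator D T) (HS : symmetric_op D T) (Hdense : densely_defined D) (Hcl : closed_op D T).
Context {I : Type} (e f : I -> H) (He : onb (defect D T Ci) e) (Hf : onb (defect D T (Copp Ci)) f).

Let Ni := defect D T Ci.
Let Nm := defect D T (Copp Ci).
Definition K : HilbertSpace := subHS Ni (defect_sub D T Ci) (defect_closed D T Ci).

Let Ho1 := onb_orthon _ _ He.
Let Ho2 := onb_orthon _ _ Hf.

Definition r2 : Cplx := RC (sqrt 2).
Definition ir2 : Cplx := RC (/ sqrt 2).

Lemma s2 : sqrt 2 * sqrt 2 = 2.
Proof. apply sqrt_sqrt. lra. Qed.
Lemma s2pos : 0 < sqrt 2.
Proof. apply sqrt_lt_R0. lra. Qed.

Lemma r2ir2 (x : H) : hscal r2 (hscal ir2 x) = x.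
Proof.
  rewrite hscal_assoc. rewrite <- (hscal_1 x) at 2. f_equal. unfold r2, ir2, RC. apply Ceq; simpl.
  - pose proof s2pos. field. lra.
  - ring.
Qed.

Lemma inner_r2 (u v : H) : inner (hscal r2 u) (hscal r2 v) = Cmul (RC 2) (inner u v).
Proof.
  hexpand. unfold r2, RC. pose proof s2 as E. set (s := sqrt 2) in *. clearbody s.
  apply Ceq; cunfold; rewrite <- E; ring.
Qed.

Lemma V_ex c : Nm c -> exists y, Rv e f c y /\ Ni y.
Proof.
  intro Hc. destruct (Rv_total e f Ho1 Ho2 c) as [y Hy].
  { intros eps Heps. apply (proj2 (proj2 (proj2 Hf))); auto. }
  exists y. split; auto. apply defect_closed. intros eps Heps.
  destruct (Rv_approx e f c y Hy eps Heps) as [l Hl]. exists (lincomb e l). split; auto.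
  apply lincomb_in. apply defect_sub. apply He.
Qed.

Lemma V_ex' y : Ni y -> exists c, Rv e f c y /\ Nm c.
Proof.
  intro Hy. destruct (Rv_total f e Ho2 Ho1 y) as [c Hc].
  { intros eps Heps. apply (proj2 (proj2 (proj2 He))); auto. }
  exists c. split. apply Rv_swap; auto. apply defect_closed. intros eps Heps.
  destruct (Rv_approx f e y c Hc eps Heps) as [l Hl]. exists (lincomb f l). split; auto.
  apply lincomb_in. apply defect_sub. apply Hf.
Qed.

Definition Kzero : K := hzero.

Definition Gp (x : H) : K := epsilon (inhabits Kzero)
  (fun k : K => exists a b c, decomp D T x a b c /\ proj1_sig (k : St Ni) = hscal r2 b).
Definition Gm (x : H) : K := epsilon (inhabits Kzero)
  (fun k : K => exists a b c y, decomp D T x a b c /\ Rv e f c y /\ proj1_sig (k : St Ni) = hscal r2 y).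

Lemma Gp_spec x a b c : decomp D T x a b c -> proj1_sig (Gp x : St Ni) = hscal r2 b.
Proof.
  intro Hd. unfold Gp.
  match goal with |- context [epsilon ?i ?P] => assert (Ex : exists k, P k); [|destruct (epsilon_spec i P Ex) as [a' [b' [c' [Hd' E]]]]] end.
  - destruct Hd as [Da [Db [Dc Ex]]].
    exists (exist _ (hscal r2 b) (Pscal Ni (defect_sub D T Ci) r2 b Db) : St Ni). exists a, b, c. split; auto. split; auto.
  - rewrite E. destruct (decomp_unique D T HL HS Hdense _ _ _ _ _ _ _ Hd Hd') as [_ [-> _]]. auto.
Qed.

Lemma Gm_spec x a b c y : decomp D T x a b c -> Rv e f c y -> proj1_sig (Gm x : St Ni) = hscal r2 y.
Proof.
  intros Hd Hr. unfold Gm.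
  match goal with |- context [epsilon ?i ?P] => assert (Ex : exists k, P k); [|destruct (epsilon_spec i P Ex) as [a' [b' [c' [y' [Hd' [Hr' E]]]]]]] end.
  - destruct Hd as [Da [Db [Dc Ex]]]. destruct (V_ex c Dc) as [y0 [Hy0 Ny0]].
    assert (y0 = y) by (apply (Rv_fun e f Ho1 Ho2 c); auto). subst y0.
    exists (exist _ (hscal r2 y) (Pscal Ni (defect_sub D T Ci) r2 y Ny0) : St Ni). exists a, b, c, y. split; auto. split; auto.
  - rewrite E. destruct (decomp_unique D T HL HS Hdense _ _ _ _ _ _ _ Hd Hd') as [_ [_ <-]].
    rewrite (Rv_fun e f Ho1 Ho2 c y y'); auto.
Qed.

Lemma decomp_lin a0 b0 x y ax bx cx ay by0 cy : decomp D T x ax bx cx -> decomp D T y ay by0 cy ->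
  decomp D T (hadd (hscal a0 x) (hscal b0 y)) (hadd (hscal a0 ax) (hscal b0 ay))
     (hadd (hscal a0 bx) (hscal b0 by0)) (hadd (hscal a0 cx) (hscal b0 cy)).
Proof.
  intros [Da [Db [Dc Ex]]] [Da' [Db' [Dc' Ey]]].
  split; [|split; [|split]].
  - apply (Dhadd D T HL); apply (Dhscal D T HL); auto.
  - apply (defect_sub D T Ci). apply (defect_sub D T Ci); auto. apply (defect_sub D T Ci); auto.
  - apply (defect_sub D T (Copp Ci)). apply (defect_sub D T (Copp Ci)); auto. apply (defect_sub D T (Copp Ci)); auto.
  - rewrite Ex, Ey. hring.
Qed.

Lemma decomp_adj x a b c : decomp D T x a b c ->
  adj D T x (hadd (hadd (T a) (hscal Ci b)) (hscal (Copp Ci) c)).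
Proof.
  intros [Da [Db [Dc Ex]]]. rewrite Ex. apply (adj_add D T). apply (adj_add D T).
  apply (adj_D D T HS); auto. exact Db. exact Dc.
Qed.

Lemma triplet : boundary_triplet D T K Gm Gp.
Proof.
  split; [|split; [|split]].
  - intros a0 b0 x y [x' Hx] [y' Hy].
    destruct (decomp_exists D T HL HS Hcl x x' Hx) as [ax [bx [cx Dx]]].
    destruct (decomp_exists D T HL HS Hcl y y' Hy) as [ay [by0 [cy Dy]]].
    destruct (V_ex cx (proj1 (proj2 (proj2 Dx)))) as [vx [Rx _]].
    destruct (V_ex cy (proj1 (proj2 (proj2 Dy)))) as [vy [Ry _]].
    apply subeq. change (proj1_sig (Gm (hadd (hscal a0 x) (hscal b0 y)) : St Ni) =
       hadd (hscal a0 (proj1_sig (Gm x : St Ni))) (hscal b0 (proj1_sig (Gm y : St Ni)))).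
    rewrite (Gm_spec x ax bx cx vx Dx Rx), (Gm_spec y ay by0 cy vy Dy Ry).
    rewrite (Gm_spec _ _ _ _ _ (decomp_lin a0 b0 _ _ _ _ _ _ _ _ Dx Dy) (Rv_lin e f a0 b0 _ _ _ _ Rx Ry)).
    hring.
  - intros a0 b0 x y [x' Hx] [y' Hy].
    destruct (decomp_exists D T HL HS Hcl x x' Hx) as [ax [bx [cx Dx]]].
    destruct (decomp_exists D T HL HS Hcl y y' Hy) as [ay [by0 [cy Dy]]].
    apply subeq. change (proj1_sig (Gp (hadd (hscal a0 x) (hscal b0 y)) : St Ni) =
       hadd (hscal a0 (proj1_sig (Gp x : St Ni))) (hscal b0 (proj1_sig (Gp y : St Ni)))).
    rewrite (Gp_spec x ax bx cx Dx), (Gp_spec y ay by0 cy Dy).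
    rewrite (Gp_spec _ _ _ _ (decomp_lin a0 b0 _ _ _ _ _ _ _ _ Dx Dy)).
    hring.
  - intros x x' y y' Hx Hy.
    destruct (decomp_exists D T HL HS Hcl x x' Hx) as [a [b [c Dx]]].
    destruct (decomp_exists D T HL HS Hcl y y' Hy) as [a' [b' [c' Dy]]].
    destruct (V_ex c (proj1 (proj2 (proj2 Dx)))) as [vx [Rx _]].
    destruct (V_ex c' (proj1 (proj2 (proj2 Dy)))) as [vy [Ry _]].
    change (inner (Gp x) (Gp y)) with (inner (proj1_sig (Gp x : St Ni)) (proj1_sig (Gp y : St Ni))).
    change (inner (Gm x) (Gm y)) with (inner (proj1_sig (Gm x : St Ni)) (proj1_sig (Gm y : St Ni))).
    rewrite (Gp_spec x a b c Dx), (Gp_spec y a' b' c' Dy), (Gm_spec x a b c vx Dx Rx), (Gm_spec y a' b' c' vy Dy Ry).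
    rewrite !inner_r2. rewrite <- (Rv_inner e f Ho1 Ho2 c vx c' vy Rx Ry).
    rewrite (adj_fun D T Hdense _ _ _ Hx (decomp_adj _ _ _ _ Dx)).
    rewrite (adj_fun D T Hdense _ _ _ Hy (decomp_adj _ _ _ _ Dy)).
    destruct Dx as [Da [Db [Dc ->]]]. destruct Dy as [Da' [Db' [Dc' ->]]].
    hexpand.
    rewrite (HS a a' Da Da').
    rewrite (Db' a Da), (Dc' a Da).
    rewrite (inner_conj (T a') b), (inner_conj (T a') c).
    rewrite (Db a' Da'), (Dc a' Da').
    hexpand.
    rewrite (inner_conj b a'), (inner_conj c a').
    cring.
  - intros k1 k2.
    destruct k1 as [y1 Hy1]. destruct k2 as [y2 Hy2].
    destruct (V_ex' y1 Hy1) as [x1 [R1 Nx1]].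
    set (b := hscal ir2 y2). set (c := hscal ir2 x1).
    assert (Db : Ni b) by (apply (defect_sub D T Ci); auto).
    assert (Dc : Nm c) by (apply (defect_sub D T (Copp Ci)); auto).
    assert (Hd : decomp D T (hadd b c) hzero b c).
    { split; [apply (Dzero D T HL)|split; [auto|split; [auto|]]]. hring. }
    assert (Rc : Rv e f c (hscal ir2 y1)).
    { pose proof (Rv_lin e f ir2 C0 _ _ _ _ R1 R1). rewrite !hscal_C0, !hadd_0 in H0. auto. }
    exists (hadd b c). split; [|split].
    + eexists. apply (decomp_adj _ _ _ _ Hd).
    + apply subeq. change (proj1_sig (Gm (hadd b c) : St Ni) = y1).
      rewrite (Gm_spec _ _ _ _ _ Hd Rc). apply r2ir2.
    + apply subeq. change (proj1_sig (Gp (hadd b c) : St Ni) = y2).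
      rewrite (Gp_spec _ _ _ _ Hd). apply r2ir2.
Qed.


Lemma ir2r2 (x : H) : hscal ir2 (hscal r2 x) = x.
Proof.
  rewrite hscal_assoc. rewrite <- (hscal_1 x) at 2. f_equal. unfold r2, ir2, RC. apply Ceq; simpl.
  - pose proof s2pos. field. lra.
  - ring.
Qed.

Context (Hcond : forall l m, Cplus l -> Cplus m -> forall x, defect D T l x -> domA D T m x).

Definition Theta : Cplx -> K -> K := fun _ _ => Kzero.

Lemma CplusCi : Cplus Ci.
Proof. unfold Cplus, Ci; simpl; lra. Qed.

Lemma char : char_fun D T K Gm Gp Theta.
Proof.
  intros l Hl. split.
  - split.
    + intros a b x y _ _. apply subeq. simpl. hring.
    + exists 0. intro x. unfold Theta, Kzero. rewrite hnorm_0. pose proof (hnorm_ge0 x). lra.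
  - intro x. split.
    + intros [g [h [Dg [Dh ->]]]].
      destruct (Hcond l Ci Hl CplusCi h Dh) as [g' [h' [Dg' [Dh' ->]]]].
      assert (Hd : decomp D T (hadd g (hadd g' h')) (hadd g g') h' hzero).
      { split; [apply (Dhadd D T HL); auto|split; [auto|split]].
        apply (defect_sub D T (Copp Ci)). hring. }
      split. eexists. apply (decomp_adj _ _ _ _ Hd).
      apply subeq. unfold Theta, Kzero. change (@hzero H = proj1_sig (Gm (hadd g (hadd g' h')) : St Ni)).
      rewrite (Gm_spec _ _ _ _ _ Hd (Rv_zero e f)). hring.
    + intros [[x' Hx] E].
      destruct (decomp_exists D T HL HS Hcl x x' Hx) as [a [b [c Dx]]].
      destruct (V_ex c (proj1 (proj2 (proj2 Dx)))) as [vx [Rx _]].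
      apply (f_equal (fun k : K => proj1_sig (k : St Ni))) in E. unfold Theta, Kzero in E.
      change (@hzero H = proj1_sig (Gm x : St Ni)) in E.
      rewrite (Gm_spec _ _ _ _ _ Dx Rx) in E.
      assert (vx = hzero) by (rewrite <- (ir2r2 vx), <- E; hring).
      assert (c = hzero).
      { apply hnorm_zero. rewrite (Rv_norm e f Ho1 Ho2 c vx Rx). subst. apply hnorm_0. }
      destruct Dx as [Da [Db [Dc ->]]].
      destruct (Hcond Ci l CplusCi Hl b Db) as [g' [h' [Dg' [Dh' ->]]]].
      exists (hadd a g'), h'. split; [apply (Dhadd D T HL); auto|split; auto]. subst. hring.
Qed.

End Main.


Theorem theorem3p1 (H : HilbertSpace) (D : H -> Prop) (T : H -> H) :
  separable H ->
  lin_operator D T -> densely_defined D -> closed_op D T -> symmetric_op D T ->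
  equal_nonzero_defect D T ->
  (phillips D T <->
   (forall l m, Cplus l -> Cplus m -> forall f, defect D T l f -> domA D T m f)).
Proof.
  intros Hsep HL Hdense Hcl HS Hdef. split.
  - intros Hph l m Hl Hm x Hx.
    destruct Hph as [_ [_ [_ [_ [_ [K0 [Gm0 [Gp0 [Th [Htr [Hch Hconst]]]]]]]]]]].
    assert (A : domA D T l x).
    { exists hzero, x. split; [apply (Dzero D T HL)|split; auto]. hring. }
    apply (proj2 (Hch l Hl)) in A. destruct A as [Ad AE].
    apply (proj2 (Hch m Hm)). split; auto. rewrite <- (Hconst l m Hl Hm). auto.
  - intro Hcond. destruct Hdef as [[I [e [f [He Hf]]]] Hnz].
    split; [auto|split; [auto|split; [auto|split; [auto|split]]]].
    + split; [exists I, e, f; auto|auto].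
    + exists (K D T), (Gm D T e f), (Gp D T), (Theta D T).
      split. apply triplet; auto. split. apply char; auto.
      intros; reflexivity.
Qed.
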